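(* Let $\mathsf{A}$ be a function from the pairs $i<j$ of $\{0,\dots,n\}$ into the nonnegative integers satisfying condition (!), and suppose $\mathsf{A}$ is indecomposable. Then $\mathsf{A}(i,n)>0$ for every $i<n$.
   Context: For integers $p,q,r$ write $r=p\,!\,q$ if $r\ge\min(p-1,q)$, with equality holding unless $p=q$. A function $\mathsf{A}$ on pairs $a<b$ of a finite linear order into the nonnegative integers satisfies (!) if $\mathsf{A}(a,b)=\mathsf{A}(b,c)\,!\,\mathsf{A}(a,c)$ whenever $a<b<c$. For such functions $\mathsf{B},\mathsf{C}$ with bases $B,C$, $\mathsf{B}+\mathsf{C}$ has base $B$ followed by $C$, agrees with $\mathsf{B}$ on $B$ and $\mathsf{C}$ on $C$, and takes value $0$ on pairs $(b,c)$ with $b\in B$, $c\in C$; functions are identified when an order-preserving bijection of the bases carries one to the other. $\mathsf{A}$ is indecomposable if there are no $\mathsf{B},\mathsf{C}$ with nonempty bases such that $\mathsf{A}=\mathsf{B}+\mathsf{C}$. *)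

(* Defs.v *)
From Stdlib Require Import ZArith Arith Lia.
Open Scope Z_scope.

(* r = p ! q  :<->  r >= min(p-1,q), with equality unless p = q (integers). *)
Definition bang (p q r : Z) : Prop :=
  r >= Z.min (p - 1) q /\ (p <> q -> r = Z.min (p - 1) q).

Close Scope Z_scope.

(* A finite linear order of size m is represented (up to order-preserving
   bijection) by {0,...,m-1}; a function on its pairs a<b is a
   nat -> nat -> nat of which only the values A a b with a < b < m matter. *)
Definition satisfies_bang (m : nat) (A : nat -> nat -> nat) : Prop :=
  forall a b c : nat, a < b -> b < c -> c < m ->
    bang (Z.of_nat (A b c)) (Z.of_nat (A a c)) (Z.of_nat (A a b)).

(* B + C : base {0..m-1} followed by {m..m+l-1} (a copy of C's base). *)
Definition fsum (m : nat) (B C : nat -> nat -> nat) : nat -> nat -> nat :=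
  fun i j => if j <? m then B i j
             else if i <? m then 0
             else C (i - m) (j - m).

Definition indecomposable (N : nat) (A : nat -> nat -> nat) : Prop :=
  ~ exists (m l : nat) (B C : nat -> nat -> nat),
      0 < m /\ 0 < l /\ m + l = N /\
      satisfies_bang m B /\ satisfies_bang l C /\
      (forall i j, i < j -> j < N -> A i j = fsum m B C i j).

(* Main.v *)
Require Import Defs.
From Stdlib Require Import ZArith Arith Lia.

Lemma rule1 n A a b c : satisfies_bang (S n) A -> a < b -> b < c -> c < S n ->
  A b c = 0 -> A a c = 0.
Proof.
  intros hA h1 h2 h3 h. specialize (hA a b c h1 h2 h3). unfold bang in hA.
  rewrite h in hA. simpl in hA. lia.
Qed.

Lemma rule2 n A a b c : satisfies_bang (S n) A -> a < b -> b < c -> c < S n ->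
  A a c = 0 -> A b c <> 0 -> A a b = 0.
Proof.
  intros hA h1 h2 h3 h h'. specialize (hA a b c h1 h2 h3). unfold bang in hA.
  rewrite h in hA. lia.
Qed.

Lemma maxsearch (P : nat -> Prop) (dec : forall x, P x \/ ~ P x) :
  forall t, (exists j, j < t /\ P j) ->
  exists k, k < t /\ P k /\ forall j, k < j < t -> ~ P j.
Proof.
  induction t as [|t IH]; intros [j [hj pj]]; [lia|].
  destruct (dec t) as [pt|npt].
  - exists t. repeat split; auto; lia.
  - destruct IH as [k [hk [pk hk2]]].
    + exists j; split; auto. destruct (Nat.eq_dec j t); subst; [contradiction|lia].
    + exists k; repeat split; auto; try lia. intros j' hj'.
      destruct (Nat.eq_dec j' t); subst; auto. apply hk2; lia.
Qed.

Theorem lemma5p7 (n : nat) (A : nat -> nat -> nat) :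
  satisfies_bang (S n) A -> indecomposable (S n) A ->
  forall i : nat, i < n -> 0 < A i n.
Proof.
  intros hA hI i hi.
  destruct (Nat.eq_dec (A i n) 0) as [h0|h0]; [|lia].
  exfalso.
  destruct (maxsearch (fun x => A x n = 0) (fun x => ltac:(destruct (Nat.eq_dec (A x n) 0); auto)) n)
    as [k [hk [pk hk2]]].
  { exists i; auto. }
  apply hI.
  exists (S k), (n - k), A, (fun x y => A (x + S k) (y + S k)).
  split; [lia|split; [lia|split; [lia|split; [|split]]]].
  - intros x y z h1 h2 h3. apply hA; lia.
  - intros x y z h1 h2 h3. apply hA; lia.
  - intros u v hab hb. rename u into a, v into b. unfold fsum.
    destruct (b <? S k) eqn:E1; auto.
    apply Nat.ltb_ge in E1.
    destruct (a <? S k) eqn:E2.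
    + apply Nat.ltb_lt in E2.
      assert (ha0 : A a n = 0).
      { destruct (Nat.eq_dec a k); subst; auto. apply (rule1 n A a k n); auto; lia. }
      destruct (Nat.eq_dec b n); subst; auto.
      apply (rule2 n A a b n); auto; try lia.
      apply hk2; lia.
    + apply Nat.ltb_ge in E2.
      rewrite !Nat.sub_add by lia. reflexivity.
Qed.
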